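(* Let $N\in\mathbb{C}^{m\times n}$ have rank $r$ and singular value decomposition $N=U\begin{pmatrix}\Sigma & 0\\ 0 & 0\end{pmatrix}V^{\ast}$, where $\Sigma\in\mathbb{C}^{r\times r}$ is diagonal with positive diagonal entries and $U\in\mathbb{C}^{m\times m}$, $V\in\mathbb{C}^{n\times n}$ are unitary. Let $X\in\mathbb{C}^{m\times m}$ and $Y\in\mathbb{C}^{n\times n}$ be nonsingular and let $M=XNY$. Assume that $X=U\begin{pmatrix}X_{1} & 0\\ X_{2} & X_{4}\end{pmatrix}U^{\ast}$ for some $X_{1}\in\mathbb{C}^{r\times r}$, $X_{2}\in\mathbb{C}^{(m-r)\times r}$, $X_{4}\in\mathbb{C}^{(m-r)\times(m-r)}$, and that $Y=V\begin{pmatrix}Y_{1} & Y_{3}\\ 0 & Y_{4}\end{pmatrix}V^{\ast}$ for some $Y_{1}\in\mathbb{C}^{r\times r}$, $Y_{3}\in\mathbb{C}^{r\times(n-r)}$, $Y_{4}\in\mathbb{C}^{(n-r)\times(n-r)}$. Then $$M^{\dagger}=(I+L^{\ast})(I+LL^{\ast})^{-1}N^{\dagger}N(Y^{-1}N^{\dagger}X^{-1})NN^{\dagger}(I+R^{\ast}R)^{-1}(I+R^{\ast}),$$ where $R=XE_{N}X^{-1}(E_{N}-I)$ and $L=(F_{N}-I)Y^{-1}F_{N}Y$.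
   Context: For a complex matrix $A$, $A^{\ast}$ is its conjugate transpose and $A^{\dagger}$ its Moore--Penrose inverse. $E_{A}:=I-AA^{\dagger}$ and $F_{A}:=I-A^{\dagger}A$ (the orthogonal projectors onto $\mathcal{N}(A^{\ast})$ and $\mathcal{N}(A)$). $I$ denotes an identity matrix of the appropriate size. *)

(* Defs.v *)
(* Complex matrices over an arbitrary numClosedFieldType C
   (e.g. algC, or R[i] for a real closed field R). *)
From HB Require Import structures.
From mathcomp Require Import all_boot all_order all_algebra.
Set Implicit Arguments. Unset Strict Implicit. Unset Printing Implicit Defensive.
Import Order.TTheory GRing.Theory Num.Theory.
Local Open Scope ring_scope.

Definition ctmx (C : numClosedFieldType) (m n : nat) (A : 'M[C]_(m, n)) : 'M[C]_(n, m) :=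
  (map_mx Num.conj A)^T.

Definition unitary (C : numClosedFieldType) (n : nat) (U : 'M[C]_n) : Prop :=
  U *m ctmx U = 1%:M /\ ctmx U *m U = 1%:M.

(* B is the Moore--Penrose inverse of A (the four Penrose equations;
   such B exists and is unique) *)
Definition is_MP_inverse (C : numClosedFieldType) (m n : nat)
    (A : 'M[C]_(m, n)) (B : 'M[C]_(n, m)) : Prop :=
  [/\ A *m B *m A = A, B *m A *m B = B,
      ctmx (A *m B) = A *m B & ctmx (B *m A) = B *m A].

(* Main.v *)
Require Import Defs.
From HB Require Import structures.
From mathcomp Require Import all_boot all_order all_algebra.
Import Order.TTheory GRing.Theory Num.Theory.
Local Open Scope ring_scope.
Set Implicit Arguments. Unset Strict Implicit.

Section CT.
Variable C : numClosedFieldType.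

Lemma ctmxM m n k (A : 'M[C]_(m, n)) (B : 'M[C]_(n, k)) :
  ctmx (A *m B) = ctmx B *m ctmx A.
Proof. by rewrite /ctmx map_mxM trmx_mul. Qed.

Lemma ctmxK m n (A : 'M[C]_(m, n)) : ctmx (ctmx A) = A.
Proof.
rewrite /ctmx map_trmx trmxK -map_mx_comp; apply/matrixP=> i j.
by rewrite mxE /= conjCK.
Qed.

Lemma ctmxD m n (A B : 'M[C]_(m, n)) : ctmx (A + B) = ctmx A + ctmx B.
Proof. by rewrite /ctmx map_mxD linearD. Qed.

Lemma ctmxN m n (A : 'M[C]_(m, n)) : ctmx (- A) = - ctmx A.
Proof. by rewrite /ctmx map_mxN linearN. Qed.

Lemma ctmxB m n (A B : 'M[C]_(m, n)) : ctmx (A - B) = ctmx A - ctmx B.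
Proof. by rewrite ctmxD ctmxN. Qed.

Lemma ctmx1 n : ctmx (1%:M : 'M[C]_n) = 1%:M.
Proof. by rewrite /ctmx map_mx1 trmx1. Qed.

Lemma ctmx0 m n : ctmx (0 : 'M[C]_(m, n)) = 0.
Proof. by rewrite /ctmx map_mx0 trmx0. Qed.

Lemma ctmx_block m1 m2 n1 n2 (A : 'M[C]_(m1, n1)) (B : 'M[C]_(m1, n2))
  (D : 'M[C]_(m2, n1)) (E : 'M[C]_(m2, n2)) :
  ctmx (block_mx A B D E) = block_mx (ctmx A) (ctmx D) (ctmx B) (ctmx E).
Proof. by rewrite /ctmx map_block_mx tr_block_mx. Qed.

Lemma ctmx_row m n1 n2 (A : 'M[C]_(m, n1)) (B : 'M[C]_(m, n2)) :
  ctmx (row_mx A B) = col_mx (ctmx A) (ctmx B).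
Proof. by rewrite /ctmx map_row_mx tr_row_mx. Qed.

Lemma ctmx_col m1 m2 n (A : 'M[C]_(m1, n)) (B : 'M[C]_(m2, n)) :
  ctmx (col_mx A B) = row_mx (ctmx A) (ctmx B).
Proof. by rewrite /ctmx map_col_mx tr_col_mx. Qed.


Lemma invmx_eq n (A B : 'M[C]_n) : A *m B = 1%:M -> invmx A = B.
Proof.
move=> AB; have [uA _] := mulmx1_unit AB.
by rewrite -[invmx A]mulmx1 -AB mulmxA mulVmx // mul1mx.
Qed.

Lemma MP_uniq m n (A : 'M[C]_(m, n)) B D :
  is_MP_inverse A B -> is_MP_inverse A D -> B = D.
Proof.
case=> hB1 hB2 hB3 hB4 [hD1 hD2 hD3 hD4].
have e1 : B = B *m (A *m D).
  have f1 : B = B *m ctmx B *m ctmx A.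
    by rewrite -mulmxA -(ctmxM A B) hB3 mulmxA hB2.
  have f2 : ctmx A = ctmx A *m ctmx D *m ctmx A.
    by rewrite -{1}hD1 ctmxM ctmxM mulmxA.
  have -> : B *m (A *m D) = B *m ctmx (A *m B) *m ctmx (A *m D).
    by rewrite hB3 hD3 (mulmxA B A B) hB2.
  rewrite !ctmxM -!mulmxA (mulmxA (ctmx A)) -f2 mulmxA -f1 //.
have e2 : D = (B *m A) *m D.
  have f1 : D = ctmx A *m ctmx D *m D.
    by rewrite -(ctmxM D A) hD4 hD2.
  have f2 : ctmx A = ctmx A *m ctmx B *m ctmx A.
    by rewrite -{1}hB1 ctmxM ctmxM mulmxA.
  have -> : B *m A *m D = ctmx (B *m A) *m ctmx (D *m A) *m D.
    by rewrite hB4 hD4 -(mulmxA (B *m A) (D *m A) D) hD2.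
  rewrite !ctmxM !mulmxA -f2 -f1 //.
rewrite e2 {1}e1 !mulmxA; done.
Qed.

Definition cj m n (W1 : 'M[C]_m) (W2 : 'M[C]_n) (A : 'M[C]_(m, n)) :=
  W1 *m A *m ctmx W2.

Lemma cjM m n k (W1 : 'M[C]_m) (W2 : 'M[C]_n) (W3 : 'M[C]_k) A B :
  unitary W2 -> cj W1 W2 A *m cj W2 W3 B = cj W1 W3 (A *m B).
Proof.
case=> _ h; rewrite /cj !mulmxA -[W1 *m A *m ctmx W2 *m W2]mulmxA h mulmx1.
by [].
Qed.

Lemma cjC m n (W1 : 'M[C]_m) (W2 : 'M[C]_n) A :
  ctmx (cj W1 W2 A) = cj W2 W1 (ctmx A).
Proof. by rewrite /cj !ctmxM ctmxK mulmxA. Qed.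

Lemma cjD m n (W1 : 'M[C]_m) (W2 : 'M[C]_n) A B :
  cj W1 W2 (A + B) = cj W1 W2 A + cj W1 W2 B.
Proof. by rewrite /cj mulmxDr mulmxDl. Qed.

Lemma cjN m n (W1 : 'M[C]_m) (W2 : 'M[C]_n) A :
  cj W1 W2 (- A) = - cj W1 W2 A.
Proof. by rewrite /cj mulmxN mulNmx. Qed.

Lemma cjB m n (W1 : 'M[C]_m) (W2 : 'M[C]_n) A B :
  cj W1 W2 (A - B) = cj W1 W2 A - cj W1 W2 B.
Proof. by rewrite cjD cjN. Qed.

Lemma cj1 n (W : 'M[C]_n) : unitary W -> cj W W 1%:M = 1%:M.
Proof. by case=> h _; rewrite /cj mulmx1. Qed.

Lemma cjK m n (W1 : 'M[C]_m) (W2 : 'M[C]_n) A :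
  unitary W1 -> unitary W2 -> cj (ctmx W1) (ctmx W2) (cj W1 W2 A) = A.
Proof.
case=> _ h1 [_ h2]; rewrite /cj ctmxK !mulmxA h1 mul1mx -mulmxA h2 mulmx1.
by [].
Qed.

Lemma unitary_ct n (W : 'M[C]_n) : unitary W -> unitary (ctmx W).
Proof. by case=> h1 h2; split; rewrite ctmxK. Qed.

Lemma cjV n (W : 'M[C]_n) A : unitary W -> invmx (cj W W A) = cj W W (invmx A).
Proof.
move=> uW; case uA: (A \in unitmx).
  by apply: invmx_eq; rewrite cjM // mulmxV // cj1.
have uW' : W \in unitmx by case: uW => h _; case: (mulmx1_unit h).
have uW'' : ctmx W \in unitmx by case: uW => h _; case: (mulmx1_unit h).
have ncA : cj W W A \notin unitmx by rewrite /cj !unitmx_mul uW' uW'' uA.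
by rewrite /invmx (negbTE ncA) uA.
Qed.

Lemma MP_cj m n (W1 : 'M[C]_m) (W2 : 'M[C]_n) A B :
  unitary W1 -> unitary W2 -> is_MP_inverse A B ->
  is_MP_inverse (cj W1 W2 A) (cj W2 W1 B).
Proof.
move=> u1 u2 [h1 h2 h3 h4]; split; rewrite ?cjM // ?cjC ?h1 ?h2 ?h3 ?h4 //.
Qed.

Lemma rv_ct_ge0 n (v : 'rV[C]_n) :
  (v *m ctmx v) 0 0 = \sum_i v 0 i * (v 0 i)^*.
Proof. by rewrite !mxE; apply: eq_bigr => i _; rewrite !mxE. Qed.

Lemma posdef_unit p r (K : 'M[C]_(p, r)) : (1%:M + ctmx K *m K) \in unitmx.
Proof.
rewrite unitmxE unitfE; apply/negP => /det0P [v nz h].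
have e : v *m ctmx v + (v *m ctmx K) *m ctmx (v *m ctmx K) = 0.
  have -> : v *m ctmx v + (v *m ctmx K) *m ctmx (v *m ctmx K)
     = v *m (1%:M + ctmx K *m K) *m ctmx v.
    by rewrite ctmxM ctmxK mulmxDr mulmx1 mulmxDl !mulmxA.
  by rewrite h mul0mx.
have := congr1 (fun M : 'M[C]_1 => M 0 0) e; rewrite mxE (rv_ct_ge0 v) (rv_ct_ge0 (v *m ctmx K)) [X in _ = X]mxE => e'.
have g1 : 0 <= \sum_i v 0 i * (v 0 i)^* by apply: sumr_ge0 => i _; exact: mul_conjC_ge0.
have g2 : 0 <= \sum_i (v *m ctmx K) 0 i * ((v *m ctmx K) 0 i)^*.
  by apply: sumr_ge0 => i _; exact: mul_conjC_ge0.
have : \sum_i v 0 i * (v 0 i)^* == 0.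
  rewrite eq_le g1 andbT; move: g2; rewrite -(lerDl (\sum_i v 0 i * (v 0 i)^*)) e' //.
rewrite psumr_eq0 => [/allP hv|i _]; last exact: mul_conjC_ge0.
case/negP: nz; apply/eqP/matrixP => i j; rewrite (ord1 i) mxE.
by have := hv j (mem_index_enum j); rewrite /= mul_conjC_eq0 => /eqP.
Qed.


Lemma cancel_r m n k (X : 'M[C]_(m, n)) (B : 'M[C]_(n, k)) (D : 'M[C]_(k, n)) :
  B *m D = 1%:M -> X *m B *m D = X.
Proof. by move=> h; rewrite -mulmxA h mulmx1. Qed.

Lemma ct_inv_herm n (P : 'M[C]_n) : ctmx P = P -> P \in unitmx ->
  ctmx (invmx P) = invmx P.
Proof.
move=> hP uP; symmetry; apply: invmx_eq.
by rewrite -{1}hP -ctmxM mulVmx // ctmx1.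
Qed.

Lemma MP_fact m n r (F : 'M[C]_(m, r)) (Z : 'M[C]_r) (G : 'M[C]_(r, n)) Fp Gp :
  Fp *m F = 1%:M -> G *m Gp = 1%:M -> Z \in unitmx ->
  ctmx (F *m Fp) = F *m Fp -> ctmx (Gp *m G) = Gp *m G ->
  is_MP_inverse (F *m Z *m G) (Gp *m invmx Z *m Fp).
Proof.
move=> hF hG uZ h3 h4.
have e1 : F *m Z *m G *m (Gp *m invmx Z *m Fp) = F *m Fp.
  by rewrite !mulmxA (cancel_r _ hG) mulmxK.
have e2 : Gp *m invmx Z *m Fp *m (F *m Z *m G) = Gp *m G.
  by rewrite !mulmxA (cancel_r _ hF) mulmxKV.
split.
- by rewrite e1 !mulmxA (cancel_r _ hF).
- by rewrite e2 -!mulmxA (mulmxA G Gp) hG mul1mx.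
- by rewrite e1.
- by rewrite e2.
Qed.

Lemma fullrank_MP m n r (F : 'M[C]_(m, r)) (Z : 'M[C]_r) (G : 'M[C]_(r, n)) :
  ctmx F *m F \in unitmx -> G *m ctmx G \in unitmx -> Z \in unitmx ->
  is_MP_inverse (F *m Z *m G)
    (ctmx G *m invmx (G *m ctmx G) *m invmx Z *m (invmx (ctmx F *m F) *m ctmx F)).
Proof.
move=> uF uG uZ.
have hC : ctmx (invmx (ctmx F *m F)) = invmx (ctmx F *m F).
  by apply: ct_inv_herm => //; rewrite ctmxM ctmxK.
have hA : ctmx (invmx (G *m ctmx G)) = invmx (G *m ctmx G).
  by apply: ct_inv_herm => //; rewrite ctmxM ctmxK.
apply: MP_fact => //.
- by rewrite -mulmxA mulVmx.
- by rewrite mulmxA mulmxV.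
- by rewrite !ctmxM ctmxK hC mulmxA.
- by rewrite !ctmxM ctmxK hA mulmxA.
Qed.

Lemma invmxM' n (A B : 'M[C]_n) : A \in unitmx -> B \in unitmx ->
  invmx (A *m B) = invmx B *m invmx A.
Proof.
by move=> uA uB; apply: invmx_eq; rewrite mulmxA (cancel_r _ (mulmxV uB)) mulmxV.
Qed.

Lemma invmx_dblock n1 n2 (A : 'M[C]_n1) (B : 'M[C]_n2) :
  A \in unitmx -> B \in unitmx ->
  invmx (block_mx A 0 0 B) = block_mx (invmx A) 0 0 (invmx B).
Proof.
move=> uA uB; apply: invmx_eq.
by rewrite mulmx_block !mulmx0 !mul0mx !addr0 !add0r !mulmxV // -scalar_mx_block.
Qed.


Definition Fm m n (N : 'M[C]_(m, n)) (Nd : 'M[C]_(n, m)) (X : 'M[C]_m) (Y : 'M[C]_n) :=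
  let EN := 1%:M - N *m Nd in
  let FN := 1%:M - Nd *m N in
  let R := X *m EN *m invmx X *m (EN - 1%:M) in
  let L := (FN - 1%:M) *m invmx Y *m FN *m Y in
  (1%:M + ctmx L) *m invmx (1%:M + L *m ctmx L) *m Nd *m N
         *m (invmx Y *m Nd *m invmx X) *m N *m Nd
         *m invmx (1%:M + ctmx R *m R) *m (1%:M + ctmx R).


Lemma Fm_cj m n (U : 'M[C]_m) (V : 'M[C]_n) N Nd X Y :
  unitary U -> unitary V ->
  Fm (cj U V N) (cj V U Nd) (cj U U X) (cj V V Y) = cj V U (Fm N Nd X Y).
Proof.
move=> uU uV; rewrite /Fm.
rewrite -(cj1 uU) -(cj1 uV).
do 12 rewrite ?(cjM _ _ _ _ uU) ?(cjM _ _ _ _ uV) ?cjC ?(cjV _ uU) ?(cjV _ uV) -?cjB -?cjD.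
by rewrite !(cj1 uU) !(cj1 uV).
Qed.


Lemma MP_congr m n (A A' : 'M[C]_(m, n)) B B' :
  A = A' -> B = B' -> is_MP_inverse A' B' -> is_MP_inverse A B.
Proof. by move=> -> ->. Qed.

Lemma core r p q (s : 'rV[C]_r) (X1 : 'M[C]_r) (X2 : 'M[C]_(p, r)) (X4 : 'M[C]_p)
    (Y1 : 'M[C]_r) (Y3 : 'M[C]_(r, q)) (Y4 : 'M[C]_q) (Nd : 'M[C]_(r + q, r + p)) :
  (forall i, 0 < s 0 i) ->
  block_mx X1 0 X2 X4 \in unitmx -> block_mx Y1 Y3 0 Y4 \in unitmx ->
  is_MP_inverse (block_mx (diag_mx s) 0 0 0 : 'M_(r + p, r + q)) Nd ->
  is_MP_inverse (block_mx X1 0 X2 X4 *m (block_mx (diag_mx s) 0 0 0 : 'M_(r + p, r + q))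
       *m block_mx Y1 Y3 0 Y4)
    (Fm (block_mx (diag_mx s) 0 0 0) Nd (block_mx X1 0 X2 X4) (block_mx Y1 Y3 0 Y4)).
Proof.
move=> hs uX0 uY0 hMP.
set S := diag_mx s.
have uS : S \in unitmx.
  rewrite unitmxE det_diag unitfE; apply/prodf_neq0 => i _.
  exact: lt0r_neq0.
have /andP [uX1 uX4] : (X1 \in unitmx) && (X4 \in unitmx).
  by move: uX0; rewrite !unitmxE det_lblock unitrM.
have /andP [uY1 uY4] : (Y1 \in unitmx) && (Y4 \in unitmx).
  by move: uY0; rewrite !unitmxE det_ublock unitrM.
have hNd : Nd = block_mx (invmx S) 0 0 0.
  apply: (MP_uniq hMP); split;
    rewrite !mulmx_block ?ctmx_block !(mulmx0, mul0mx, addr0, ctmx0, mulmxV, mulVmx) ?ctmx1 ?mul1mx //.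
set iX1 := invmx X1; set iX4 := invmx X4; set iY1 := invmx Y1; set iY4 := invmx Y4.
set Sd := invmx S.
have hiX : invmx (block_mx X1 0 X2 X4) = block_mx iX1 0 (- (iX4 *m X2 *m iX1)) iX4.
  apply: invmx_eq; rewrite mulmx_block !(mulmx0, mul0mx, addr0, add0r) /iX1 /iX4.
  rewrite mulmxV // mulmxV // mulmxN !mulmxA mulmxV // mul1mx addrN -scalar_mx_block //.
have hiY : invmx (block_mx Y1 Y3 0 Y4) = block_mx iY1 (- (iY1 *m Y3 *m iY4)) 0 iY4.
  apply: invmx_eq; rewrite mulmx_block !(mulmx0, mul0mx, addr0, add0r) /iY1 /iY4.
  rewrite mulmxV // mulmxV // mulmxN !mulmxA mulmxV // mul1mx addNr -scalar_mx_block //.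
have hR : block_mx X1 0 X2 X4 *m (1%:M - block_mx S 0 0 0 *m Nd) *m invmx (block_mx X1 0 X2 X4)
   *m (1%:M - block_mx S 0 0 0 *m Nd - 1%:M) = block_mx 0 0 (X2 *m iX1) 0.
  rewrite hNd hiX (scalar_mx_block r p 1) !mulmx_block.
  rewrite !(mulmx0, mul0mx, addr0, add0r, mulmxV, opp_block_mx, add_block_mx, oppr0, subrr, subr0) //.
  rewrite !mulmx_block !(mulmx0, mul0mx, addr0, add0r, mulmx1, mul1mx, oppr0, subrr, subr0, sub0r, mulmxN, mulNmx, opprK) //.
  by rewrite /iX4 !mulmxA mulmxV // mul1mx.
have hL : (1%:M - Nd *m block_mx S 0 0 0 - 1%:M) *m invmx (block_mx Y1 Y3 0 Y4)
   *m (1%:M - Nd *m block_mx S 0 0 0) *m block_mx Y1 Y3 0 Y4 = block_mx 0 (iY1 *m Y3) 0 0.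
  rewrite hNd hiY (scalar_mx_block r q 1) !mulmx_block.
  rewrite !(mulmx0, mul0mx, addr0, add0r, mulVmx, opp_block_mx, add_block_mx, oppr0, subrr, subr0) //.
  rewrite !mulmx_block !(mulmx0, mul0mx, addr0, add0r, mulmx1, mul1mx, oppr0, subrr, subr0, sub0r, mulmxN, mulNmx, opprK) //.
  by rewrite /iY4 mulmxKV.
set K := X2 *m iX1; set H := iY1 *m Y3.
have uK : 1%:M + ctmx K *m K \in unitmx by apply: posdef_unit.
have uH : 1%:M + H *m ctmx H \in unitmx by have := posdef_unit (ctmx H); rewrite ctmxK.
rewrite /Fm; cbv zeta.
rewrite hR hL hNd hiX hiY (scalar_mx_block r q 1) (scalar_mx_block r p 1) !ctmx_block !ctmx0.
rewrite !mulmx_block !(mulmx0, mul0mx, addr0, add0r, mulmx1, mul1mx, add_block_mx).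
rewrite (invmx_dblock uK (unitmx1 _ _)) (invmx_dblock uH (unitmx1 _ _)) !invmx1 -/H -/K.
rewrite !mulmx_block !(mulmx0, mul0mx, addr0, add0r, mulmx1, mul1mx, add_block_mx).
rewrite !(mulmxKV uS) !(mulmxK uS).
have uF : ctmx (col_mx 1%:M K) *m col_mx 1%:M K \in unitmx.
  by rewrite ctmx_col ctmx1 mul_row_col mul1mx.
have uG : row_mx 1%:M H *m ctmx (row_mx 1%:M H) \in unitmx.
  by rewrite ctmx_row ctmx1 mul_row_col mul1mx.
have uZ : X1 *m S *m Y1 \in unitmx by rewrite !unitmx_mul uX1 uS uY1.
apply: (MP_congr _ _ (fullrank_MP uF uG uZ)).
  rewrite mul_col_mx mul1mx mul_col_row mulmx1 /K /H.
  by rewrite !mulmxA /iX1 /iY1 !(mulmxK uY1) !(mulmxKV uX1) mulmx1.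
rewrite ctmx_row ctmx_col ctmx1 !mul_row_col !mul1mx.
have uXS : X1 *m S \in unitmx by rewrite unitmx_mul uX1 uS.
rewrite (invmxM' uXS uY1) (invmxM' uX1 uS).
rewrite !mulmxA !mul_col_mx !mul_mx_row -block_mxEv !mulmx1 !mul1mx /iX1 /iY1.
by [].
Qed.

End CT.
Unset Implicit Arguments.

Theorem theorem3p3 (C : numClosedFieldType) (r p q : nat)
    (N : 'M[C]_(r + p, r + q)) (U : 'M[C]_(r + p)) (V : 'M[C]_(r + q))
    (s : 'rV[C]_r)
    (X1 : 'M[C]_r) (X2 : 'M[C]_(p, r)) (X4 : 'M[C]_p)
    (Y1 : 'M[C]_r) (Y3 : 'M[C]_(r, q)) (Y4 : 'M[C]_q)
    (X : 'M[C]_(r + p)) (Y : 'M[C]_(r + q))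
    (Nd : 'M[C]_(r + q, r + p)) (Md : 'M[C]_(r + q, r + p)) :
  \rank N = r ->
  unitary U -> unitary V ->
  (forall i, 0 < s 0 i) ->
  N = U *m block_mx (diag_mx s) 0 0 0 *m ctmx V ->
  X \in unitmx -> Y \in unitmx ->
  X = U *m block_mx X1 0 X2 X4 *m ctmx U ->
  Y = V *m block_mx Y1 Y3 0 Y4 *m ctmx V ->
  is_MP_inverse N Nd ->
  is_MP_inverse (X *m N *m Y) Md ->
  let EN := 1%:M - N *m Nd in
  let FN := 1%:M - Nd *m N in
  let R := X *m EN *m invmx X *m (EN - 1%:M) in
  let L := (FN - 1%:M) *m invmx Y *m FN *m Y in
  Md = (1%:M + ctmx L) *m invmx (1%:M + L *m ctmx L) *m Nd *m N
         *m (invmx Y *m Nd *m invmx X) *m N *m Nd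
         *m invmx (1%:M + ctmx R *m R) *m (1%:M + ctmx R).
Proof.
move=> _ uU uV hs hN uX uY hX hY hNd hMd EN FN R L.
change (Md = Fm N Nd X Y).
set N0 := block_mx (diag_mx s) 0 0 0 in hN.
set X0 := block_mx X1 0 X2 X4 in hX.
set Y0 := block_mx Y1 Y3 0 Y4 in hY.
have uU' := unitary_ct uU; have uV' := unitary_ct uV.
have eNd : Nd = cj V U (cj (ctmx V) (ctmx U) Nd).
  by have := cjK Nd uV' uU'; rewrite !ctmxK.
have hN0 : N0 = cj (ctmx U) (ctmx V) N by rewrite hN; rewrite (cjK N0 uU uV).
have hNd0 : is_MP_inverse N0 (cj (ctmx V) (ctmx U) Nd).
  by rewrite hN0; apply: MP_cj.
have [uU1 uU2] : U \in unitmx /\ ctmx U \in unitmx.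
  by case: uU => h _; exact: mulmx1_unit h.
have [uV1 uV2] : V \in unitmx /\ ctmx V \in unitmx.
  by case: uV => h _; exact: mulmx1_unit h.
have uX0 : X0 \in unitmx.
  have -> : X0 = cj (ctmx U) (ctmx U) X by rewrite hX (cjK X0 uU uU).
  by rewrite /cj ctmxK !unitmx_mul uX uU1 uU2.
have uY0 : Y0 \in unitmx.
  have -> : Y0 = cj (ctmx V) (ctmx V) Y by rewrite hY (cjK Y0 uV uV).
  by rewrite /cj ctmxK !unitmx_mul uY uV1 uV2.
have := MP_cj uU uV (core hs uX0 uY0 hNd0).
rewrite -(cjM U V (X0 *m N0) Y0 uV) -(cjM U V X0 N0 uU).
rewrite -(Fm_cj N0 (cj (ctmx V) (ctmx U) Nd) X0 Y0 uU uV) -eNd.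
rewrite /cj -hX -hY -hN => h.
exact: MP_uniq hMd h.
Qed.
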